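(* Let $X$ have a pdf $f$ satisfying Conditions (A) and (B) below. For $\delta>0$ let $D_\delta=D(Q_{\mathrm{uni}}^\delta)$ be the mean-squared distortion of the uniform quantizer with cell size $\delta$. Then $$\lim_{\delta\to 0}\Big[\mathrm{AoI}(S_{\mathrm z},Q_{\mathrm{uni}}^\delta,F^* )-\inf_{S}\ \inf_{Q:\,D(Q)\le D_\delta}\ \mathrm{AoI}(S,Q,F^* )\Big]=0,$$ where the outer infimum is over all stationary deterministic sampling policies $S$ and the inner one is over all quantizers $Q$ with $D(Q)\le D_\delta$. In words: as the distortion tends to $0$, zero-wait sampling, uniform quantization and the real-valued AoI-optimal code together asymptotically achieve the optimal AoI of the joint sampling–quantization–coding problem.
   Context: Let $X$ be a real random variable with pdf $f$. Condition (A): $f$ is continuous and differentiable, and its support is a bounded interval $I$. Let $M=\max f$. Condition (B): the integrals $\int_I f(x)\log_2^2 f(x)\,dx$ and $h(X)=-\int_I f(x)\log_2 f(x)\,dx$ exist and are finite. Quantizers. A quantizer $Q$ partitions $I$ into consecutive intervals $[a_{i-1},a_i]$. Each interval has a representation point $c_i$, and $Q(X)=c_i$ when $X$ lies in the $i$-th cell. Write $p_i=P(X\in[a_{i-1},a_i])$. The output entropy is $H[Q(X)]=-\sum_i p_i\log_2 p_i$, and the mean-squared distortion is $D(Q)=\sum_i\int_{a_{i-1}}^{a_i}(x-c_i)^2f(x)\,dx$. The uniform quantizer $Q_{\mathrm{uni}}^\delta$ partitions $I$ into consecutive cells of length $\delta$, with representation points at the cell midpoints. Codes. A real-valued code for $Q$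 assigns a length $l_i\in\mathbb R^+$ to each cell, subject to the Kraft inequality $\sum_i 2^{-l_i}\le1$. The random codeword length is $L=l_i$ when $X$ is in cell $i$. Sampling policies. A stationary deterministic sampling policy $S$ is given by a measurable function $z:[0,\infty)\to[0,W]$, for some fixed $W$, which determines the waiting time $Z=z(L)\ge0$. The zero-wait policy $S_{\mathrm z}$ has $z\equiv0$. Objective. The AoI of $(S,Q,l)$ is $\mathrm{AoI}(S,Q,l)=\frac{E[(L+Z)^2]}{2E[L+Z]}+E[L]$. The real-valued AoI-optimal code $F^*$ attains the infimum over codes, and we write $\mathrm{AoI}(S,Q,F^* )=\inf_l \mathrm{AoI}(S,Q,l)$, the infimum being over real-valued codes for $Q$. *)

(* Defs.v *)
From Stdlib Require Import Reals.
From Coquelicot Require Import Coquelicot.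
Open Scope R_scope.

Fixpoint fsum (N : nat) (g : nat -> R) : R :=
  match N with
  | O => 0
  | S n => fsum n g + g n
  end.

Definition log2 (x : R) : R := ln x / ln 2.

(* f is a pdf whose support (closure of {f > 0}) is the bounded interval [a,b] *)
Definition is_pdf_on (f : R -> R) (a b : R) : Prop :=
  a < b /\
  (forall x, 0 <= f x) /\
  (forall x, (x < a \/ b < x) -> f x = 0) /\
  (forall x y, a <= x -> x < y -> y <= b -> exists z, x < z < y /\ 0 < f z) /\
  ex_RInt f a b /\ RInt f a b = 1.

Definition condA (f : R -> R) (a b : R) : Prop :=
  is_pdf_on f a b /\
  (forall x, a <= x <= b ->
     filterlim f (within (fun y => a <= y <= b) (locally x)) (locally (f x))) /\
  (forall x, a < x < b -> ex_derive f x).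

Definition condB (f : R -> R) (a b : R) : Prop :=
  ex_RInt (fun x => f x * (log2 (f x)) ^ 2) a b /\
  ex_RInt (fun x => f x * log2 (f x)) a b.

(* N cells [qa i, qa (i+1)], i < N, representation points qc i *)
Record quantizer := mkQuantizer {
  qN : nat;
  qa : nat -> R;
  qc : nat -> R
}.

Definition valid_quantizer (a b : R) (Q : quantizer) : Prop :=
  (1 <= qN Q)%nat /\ qa Q 0 = a /\ qa Q (qN Q) = b /\
  (forall i, (i < qN Q)%nat -> qa Q i < qa Q (S i)).

Definition cell_prob (f : R -> R) (Q : quantizer) (i : nat) : R :=
  RInt f (qa Q i) (qa Q (S i)).

Definition distortion (f : R -> R) (Q : quantizer) : R :=
  fsum (qN Q) (fun i =>
    RInt (fun x => (x - qc Q i) ^ 2 * f x) (qa Q i) (qa Q (S i))).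

(* smallest integer >= x *)
Definition ceil_nat (x : R) : nat := Z.to_nat (- Int_part (- x)).

(* uniform quantizer with cell size delta on [a,b]: cells of length delta
   starting at a (last cell truncated at b), midpoints as representation *)
Definition Q_uni (a b delta : R) : quantizer :=
  mkQuantizer (ceil_nat ((b - a) / delta))
    (fun i => Rmin (a + INR i * delta) b)
    (fun i => (Rmin (a + INR i * delta) b + Rmin (a + INR (S i) * delta) b) / 2).

Definition valid_code (Q : quantizer) (l : nat -> R) : Prop :=
  (forall i, (i < qN Q)%nat -> 0 < l i) /\
  fsum (qN Q) (fun i => Rpower 2 (- l i)) <= 1.

(* stationary deterministic policy: waiting time z(L) in [0,W].
   (Measurability is immaterial: L takes finitely many values.) *)
Definition valid_policy (W : R) (z : R -> R) : Prop :=
  forall x, 0 <= x -> 0 <= z x <= W.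

Definition zero_wait : R -> R := fun _ => 0.

Definition AoI (f : R -> R) (z : R -> R) (Q : quantizer) (l : nat -> R) : R :=
  let p := cell_prob f Q in
  let EL := fsum (qN Q) (fun i => p i * l i) in
  let E1 := fsum (qN Q) (fun i => p i * (l i + z (l i))) in
  let E2 := fsum (qN Q) (fun i => p i * (l i + z (l i)) ^ 2) in
  E2 / (2 * E1) + EL.

(* infimum of a set of reals (bounded below and nonempty in all uses) *)
Definition inf_R (P : R -> Prop) : R := real (Glb_Rbar P).

Definition AoI_opt (f : R -> R) (z : R -> R) (Q : quantizer) : R :=
  inf_R (fun v => exists l, valid_code Q l /\ v = AoI f z Q l).

Definition AoI_joint_opt (f : R -> R) (a b W Dmax : R) : R :=
  inf_R (fun u => exists z, valid_policy W z /\
    u = inf_R (fun v => exists Q, valid_quantizer a b Q /\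
                  distortion f Q <= Dmax /\ v = AoI_opt f z Q)).

(* Main.v *)
Require Import Defs.
From Stdlib Require Import Reals Lra Lia Psatz ZArith.
From Coquelicot Require Import Coquelicot.
Open Scope R_scope.


Lemma ln_le_sub1 x : 0 < x -> ln x <= x - 1.
Proof. intros H. pose proof (exp_ineq1_le (ln x)). rewrite exp_ln in H0; lra. Qed.

Lemma gibbs_pt y G : 0 <= y -> 0 < G -> y * ln G + y - G <= y * ln y.
Proof.
  intros Hy HG. destruct (Req_dec y 0) as [->|Hy0]. lra.
  assert (0 < y) by lra.
  pose proof (ln_le_sub1 (G / y)).
  assert (0 < G / y) by (apply Rdiv_lt_0_compat; lra).
  specialize (H0 H1). unfold Rdiv in H0. rewrite ln_mult in H0 by (auto; apply Rinv_0_lt_compat; lra).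
  rewrite ln_Rinv in H0 by lra.
  assert (y * (ln G - ln y) <= y * (G * / y - 1)) by (apply Rmult_le_compat_l; lra).
  replace (y * (G * / y - 1)) with (G - y) in H2 by (field; lra). lra.
Qed.

Lemma yln_le y K : 0 <= y <= K -> 0 < K -> y * ln y <= y * ln K.
Proof.
  intros [H1 H2] HK. destruct (Req_dec y 0) as [->|Hy0]. lra.
  apply Rmult_le_compat_l. lra. apply ln_le; lra.
Qed.

Lemma fsum_ext N g h : (forall i, (i < N)%nat -> g i = h i) -> fsum N g = fsum N h.
Proof. induction N; simpl; intros; auto. rewrite IHN by (intros; apply H; lia). rewrite H by lia. auto. Qed.

Lemma fsum_le N g h : (forall i, (i < N)%nat -> g i <= h i) -> fsum N g <= fsum N h.
Proof. induction N; simpl; intros. lra. assert (fsum N g <= fsum N h) by (apply IHN; intros; apply H; lia).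
  specialize (H N ltac:(lia)). lra. Qed.

Lemma fsum_plus N g h : fsum N (fun i => g i + h i) = fsum N g + fsum N h.
Proof. induction N; simpl. lra. rewrite IHN. lra. Qed.

Lemma fsum_minus N g h : fsum N (fun i => g i - h i) = fsum N g - fsum N h.
Proof. induction N; simpl. lra. rewrite IHN. lra. Qed.

Lemma fsum_scal N c g : fsum N (fun i => c * g i) = c * fsum N g.
Proof. induction N; simpl. lra. rewrite IHN. lra. Qed.

Lemma fsum_const N c : fsum N (fun _ => c) = INR N * c.
Proof. induction N; cbn [fsum]. simpl; lra. rewrite IHN. rewrite S_INR. lra. Qed.

Lemma fsum_tele N g : fsum N (fun i => g (S i) - g i) = g N - g O.
Proof. induction N; simpl. lra. rewrite IHN. lra. Qed.

Lemma fsum_nonneg N g : (forall i, (i < N)%nat -> 0 <= g i) -> 0 <= fsum N g.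
Proof. intros. replace 0 with (fsum N (fun _ => 0)). apply fsum_le; auto.
  rewrite fsum_const; lra. Qed.

Lemma ball_R (x e y : R) : ball x e y <-> Rabs (y - x) < e.
Proof. reflexivity. Qed.

Lemma RI_plus g h s t : ex_RInt g s t -> ex_RInt h s t ->
  RInt (fun x => g x + h x) s t = RInt g s t + RInt h s t.
Proof. intros. apply (RInt_plus g h); auto. Qed.
Lemma RI_minus g h s t : ex_RInt g s t -> ex_RInt h s t ->
  RInt (fun x => g x - h x) s t = RInt g s t - RInt h s t.
Proof. intros. apply (RInt_minus g h); auto. Qed.
Lemma RI_scal c g s t : ex_RInt g s t -> RInt (fun x => c * g x) s t = c * RInt g s t.
Proof. intros. apply (RInt_scal g s t c); auto. Qed.
Lemma RI_const c s t : RInt (fun _ => c) s t = c * (t - s).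
Proof. rewrite RInt_const. unfold scal; simpl; unfold mult; simpl. lra. Qed.
Lemma exRI_plus g h s t : ex_RInt g s t -> ex_RInt h s t -> ex_RInt (fun x => g x + h x) s t.
Proof. intros. apply (ex_RInt_plus g h); auto. Qed.
Lemma exRI_minus g h s t : ex_RInt g s t -> ex_RInt h s t -> ex_RInt (fun x => g x - h x) s t.
Proof. intros. apply (ex_RInt_minus g h); auto. Qed.
Lemma exRI_scal c g s t : ex_RInt g s t -> ex_RInt (fun x => c * g x) s t.
Proof. intros. apply (ex_RInt_scal g s t c); auto. Qed.
Lemma exRI_const (c s t : R) : ex_RInt (fun _ => c) s t.
Proof. apply (ex_RInt_const s t c). Qed.

Lemma RI_le g h s t : s <= t -> ex_RInt g s t -> ex_RInt h s t ->
  (forall x, s < x < t -> g x <= h x) -> RInt g s t <= RInt h s t.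
Proof. apply RInt_le. Qed.

Lemma RI_chasles g s u t : ex_RInt g s u -> ex_RInt g u t ->
  RInt g s u + RInt g u t = RInt g s t.
Proof. intros. apply (RInt_Chasles g s u t); auto. Qed.

Lemma RI_nonneg g s t : s <= t -> ex_RInt g s t -> (forall x, s < x < t -> 0 <= g x) -> 0 <= RInt g s t.
Proof. intros. rewrite <- (Rmult_0_l (t - s)). rewrite <- RI_const. apply RI_le; auto. apply exRI_const. Qed.

Definition clamp (a b x : R) := Rmax a (Rmin b x).

Lemma clamp_lip a b x y : a <= b -> Rabs (clamp a b y - clamp a b x) <= Rabs (y - x).
Proof. intros. unfold clamp, Rmax, Rmin. repeat destruct Rle_dec; unfold Rabs; repeat destruct Rcase_abs; lra. Qed.

Lemma clamp_in a b x : a <= b -> a <= clamp a b x <= b.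
Proof. intros. unfold clamp, Rmax, Rmin. repeat destruct Rle_dec; lra. Qed.

Lemma clamp_id a b x : a <= x <= b -> clamp a b x = x.
Proof. intros. unfold clamp, Rmax, Rmin. repeat destruct Rle_dec; lra. Qed.

Lemma cont_within_clamp (f : R -> R) a b : a <= b ->
  (forall x, a <= x <= b ->
     filterlim f (within (fun y => a <= y <= b) (locally x)) (locally (f x))) ->
  forall x, continuous (fun y => f (clamp a b y)) x.
Proof.
  intros Hab Hf x. unfold continuous.
  apply (filterlim_comp _ _ _ (clamp a b) f _ (within (fun y => a <= y <= b) (locally (clamp a b x)))).
  - intros P [eps HP]. exists eps. intros y Hy. apply HP.
    apply ball_R. apply ball_R in Hy. eapply Rle_lt_trans. apply clamp_lip; auto. auto.
    apply clamp_in; auto.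
  - apply Hf. apply clamp_in; auto.
Qed.

Lemma exRI_sub (g : R -> R) a b s t : a <= s -> s <= t -> t <= b -> ex_RInt g a b -> ex_RInt g s t.
Proof. intros. apply (@ex_RInt_Chasles_1 R_CompleteNormedModule _ s t b). lra.
  apply (@ex_RInt_Chasles_2 R_CompleteNormedModule _ a s b). lra. auto. Qed.

Lemma exRI_ext (g h : R -> R) s t : s <= t -> (forall x, s < x < t -> g x = h x) -> ex_RInt g s t -> ex_RInt h s t.
Proof. intros. apply (@ex_RInt_ext R_NormedModule g h). rewrite Rmin_left, Rmax_right by lra. auto. auto. Qed.

Lemma RI_ext (g h : R -> R) s t : s <= t -> (forall x, s < x < t -> g x = h x) -> RInt g s t = RInt h s t.
Proof. intros. apply (@RInt_ext R_CompleteNormedModule g h). rewrite Rmin_left, Rmax_right by lra. auto. Qed.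

Lemma cont_of_der (g : R -> R) x : ex_derive g x -> continuous g x.
Proof. apply (@ex_derive_continuous R_AbsRing R_NormedModule). Qed.

Section Basic.
Variables (f : R -> R) (a b : R).
Hypothesis hA : condA f a b.
Hypothesis hB : condB f a b.

Lemma hab : a < b. Proof. apply hA. Qed.
Lemma f_nonneg x : 0 <= f x. Proof. apply hA. Qed.
Lemma f_pos_sub x y : a <= x -> x < y -> y <= b -> exists z, x < z < y /\ 0 < f z.
Proof. apply hA. Qed.
Lemma f_int1 : RInt f a b = 1. Proof. apply hA. Qed.

Definition ft x := f (clamp a b x).

Lemma ft_cont x : continuous ft x.
Proof. apply cont_within_clamp. pose proof hab; lra. apply hA. Qed.

Lemma ft_eq x : a <= x <= b -> ft x = f x.
Proof. intros; unfold ft; rewrite clamp_id; auto. Qed.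

Lemma ex_gf g s t : (forall x, continuous g x) -> a <= s -> s <= t -> t <= b ->
  ex_RInt (fun x => g x * f x) s t.
Proof.
  intros Hg H1 H2 H3.
  apply (ex_RInt_ext (fun x => g x * ft x)).
  { intros x Hx. rewrite Rmin_left in Hx by lra. rewrite Rmax_right in Hx by lra.
    rewrite ft_eq; auto; lra. }
  apply (@ex_RInt_continuous R_CompleteNormedModule). intros z _. apply (continuous_mult g ft). apply Hg. apply ft_cont.
Qed.

Lemma ex_f s t : a <= s -> s <= t -> t <= b -> ex_RInt f s t.
Proof.
  intros. apply (ex_RInt_ext (fun x => 1 * f x)). intros; lra.
  apply ex_gf; auto. intros; apply continuous_const.
Qed.

Lemma ex_flnf s t : a <= s -> s <= t -> t <= b -> ex_RInt (fun x => f x * ln (f x)) s t.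
Proof.
  intros. destruct hB as [_ HB2].
  assert (ex_RInt (fun x => f x * log2 (f x)) s t).
  { apply (exRI_sub _ a b); auto. }
  apply (exRI_ext (fun x => ln 2 * (f x * log2 (f x)))). auto.
  { intros. unfold log2. field. pose proof ln_lt_2; lra. }
  apply exRI_scal; auto.
Qed.

Lemma f_bound : exists M, 1 <= M /\ forall x, f x <= M.
Proof.
  destruct (continuity_ab_maj ft a b) as [m [Hm _]]. pose proof hab; lra.
  intros c _. apply continuity_pt_filterlim. apply ft_cont.
  exists (Rmax 1 (ft m)). split. apply Rmax_l.
  intros x. destruct (Rle_dec a x); [destruct (Rle_dec x b)|].
  - rewrite <- ft_eq by lra. eapply Rle_trans. apply Hm; lra. apply Rmax_r.
  - destruct hA as [[_ [_ [Hout _]]] _]. rewrite Hout by lra. pose proof (Rmax_l 1 (ft m)); lra.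
  - destruct hA as [[_ [_ [Hout _]]] _]. rewrite Hout by lra. pose proof (Rmax_l 1 (ft m)); lra.
Qed.

Lemma f_unif eta : 0 < eta -> exists d0, 0 < d0 /\
  forall x y, a <= x <= b -> a <= y <= b -> Rabs (x - y) < d0 -> Rabs (f x - f y) < eta.
Proof.
  intros He. destruct (Heine ft (fun c => a <= c <= b) (compact_P3 a b)) with (mkposreal eta He) as [d Hd].
  intros c _. apply continuity_pt_filterlim. apply ft_cont.
  exists d. split. apply cond_pos. intros x y Hx Hy Hxy.
  rewrite <- (ft_eq x), <- (ft_eq y) by auto. apply Hd; auto.
Qed.

Lemma pos_int s t : a <= s -> s < t -> t <= b -> 0 < RInt f s t.
Proof.
  intros H1 H2 H3. destruct (f_pos_sub s t H1 H2 H3) as [z [Hz Hfz]].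
  assert (Hc := ft_cont z). apply continuity_pt_filterlim in Hc.
  destruct (Hc (f z / 2) ltac:(lra)) as [al [Hal Hal2]].
  set (s' := Rmax s (z - al/2)). set (t' := Rmin t (z + al/2)).
  assert (s <= s' < z) by (unfold s', Rmax; destruct Rle_dec; lra).
  assert (z < t' <= t) by (unfold t', Rmin; destruct Rle_dec; lra).
  rewrite <- (RI_chasles f s s' t), <- (RI_chasles f s' t' t).
  2,3,4,5: apply ex_f; lra.
  assert (0 <= RInt f s s') by (apply RI_nonneg; [lra|apply ex_f; lra| intros; apply f_nonneg]).
  assert (0 <= RInt f t' t) by (apply RI_nonneg; [lra|apply ex_f; lra| intros; apply f_nonneg]).
  assert (f z / 2 * (t' - s') <= RInt f s' t').
  { rewrite <- RI_const. apply RI_le. lra. apply exRI_const. apply ex_f; lra.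
    intros x Hx. 
    assert (Dx : R_dist x z < al). { unfold R_dist. unfold s', t', Rmax, Rmin in *. repeat destruct Rle_dec; unfold Rabs; destruct Rcase_abs; lra. }
    destruct (Req_dec x z) as [->|Hxz]. lra.
    assert (HD : D_x no_cond z x) by (split; [exact I| auto]).
    specialize (Hal2 x (conj HD Dx)). simpl in Hal2. unfold R_dist, ft in Hal2.
    rewrite !clamp_id in Hal2 by lra. unfold Rabs in Hal2; destruct Rcase_abs in Hal2; lra. }
  assert (0 < f z / 2 * (t' - s')) by (apply Rmult_lt_0_compat; lra). lra.
Qed.

End Basic.

Section Quant.
Variables (f : R -> R) (a b : R).
Hypothesis hA : condA f a b.
Hypothesis hB : condB f a b.
Variable Q : quantizer.
Hypothesis hQ : valid_quantizer a b Q.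

Lemma qa_mono i j : (i <= j <= qN Q)%nat -> qa Q i <= qa Q j.
Proof.
  intros [Hij HjN]. induction Hij. lra.
  assert (qa Q m < qa Q (S m)) by (apply hQ; lia). specialize (IHHij ltac:(lia)). lra.
Qed.

Lemma qa_in i : (i <= qN Q)%nat -> a <= qa Q i <= b.
Proof.
  intros. destruct hQ as [_ [H0 [HN _]]]. split.
  rewrite <- H0. apply qa_mono; lia. rewrite <- HN. apply qa_mono; lia.
Qed.

Lemma cell_in i : (i < qN Q)%nat -> a <= qa Q i /\ qa Q i < qa Q (S i) /\ qa Q (S i) <= b.
Proof.
  intros. pose proof (qa_in i ltac:(lia)). pose proof (qa_in (S i) ltac:(lia)).
  assert (qa Q i < qa Q (S i)) by (apply hQ; lia). lra.
Qed.

Lemma sum_RInt (h : R -> R) : ex_RInt h a b ->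
  fsum (qN Q) (fun i => RInt h (qa Q i) (qa Q (S i))) = RInt h a b.
Proof.
  intros Hh. destruct hQ as [_ [H0 [HN _]]].
  assert (forall n, (n <= qN Q)%nat -> fsum n (fun i => RInt h (qa Q i) (qa Q (S i))) = RInt h a (qa Q n)).
  { induction n; intros Hn; cbn [fsum].
    - rewrite H0. rewrite RInt_point. reflexivity.
    - rewrite IHn by lia. pose proof (cell_in n ltac:(lia)).
      apply RI_chasles; apply (exRI_sub _ a b); lra || auto. }
  rewrite H by lia. rewrite HN. auto.
Qed.

Lemma sum_len : fsum (qN Q) (fun i => qa Q (S i) - qa Q i) = b - a.
Proof. rewrite fsum_tele. destruct hQ as [_ [H0 [HN _]]]. rewrite H0, HN. auto. Qed.

Lemma sum_p : fsum (qN Q) (cell_prob f Q) = 1.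
Proof. unfold cell_prob. rewrite sum_RInt. apply (f_int1 f a b hA). apply hA. Qed.

Lemma p_pos i : (i < qN Q)%nat -> 0 < cell_prob f Q i.
Proof. intros. pose proof (cell_in i H). apply (pos_int f a b hA); lra. Qed.

Lemma p_le1 i : (i < qN Q)%nat -> cell_prob f Q i <= 1.
Proof.
  intros Hi. rewrite <- sum_p.
  assert (forall n, (i < n <= qN Q)%nat -> cell_prob f Q i <= fsum n (cell_prob f Q)).
  { induction n; intros Hn. lia. cbn [fsum]. destruct (Nat.eq_dec i n).
    - subst. assert (0 <= fsum n (cell_prob f Q)) by (apply fsum_nonneg; intros; apply Rlt_le, p_pos; lia). lra.
    - assert (0 < cell_prob f Q n) by (apply p_pos; lia). specialize (IHn ltac:(lia)). lra. }
  apply H. lia.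
Qed.

Definition Dcell i := RInt (fun x => (x - qc Q i) ^ 2 * f x) (qa Q i) (qa Q (S i)).

Lemma Dcell_nonneg i : (i < qN Q)%nat -> 0 <= Dcell i.
Proof.
  intros. pose proof (cell_in i H). apply RI_nonneg. lra.
  apply (ex_gf f a b hA); try lra. intros; apply cont_of_der; auto_derive; auto.
  intros. pose proof (f_nonneg f a b hA x). apply Rmult_le_pos; auto. apply pow2_ge_0.
Qed.

Lemma Dcell_le_dist i : (i < qN Q)%nat -> Dcell i <= distortion f Q.
Proof.
  intros Hi. unfold distortion. fold Dcell.
  assert (forall n, (i < n <= qN Q)%nat -> Dcell i <= fsum n Dcell).
  { induction n; intros Hn. lia. cbn [fsum]. destruct (Nat.eq_dec i n).
    - subst. assert (0 <= fsum n Dcell) by (apply fsum_nonneg; intros; apply Dcell_nonneg; lia). lra.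
    - assert (0 <= Dcell n) by (apply Dcell_nonneg; lia). specialize (IHn ltac:(lia)). lra. }
  apply H. lia.
Qed.

Definition Hn := fsum (qN Q) (fun i => - (cell_prob f Q i * ln (cell_prob f Q i))).
Definition hdiff := RInt (fun x => f x * ln (f x)) a b.

Lemma T_sum : fsum (qN Q) (fun i => RInt (fun x => f x * ln (f x)) (qa Q i) (qa Q (S i))
     - cell_prob f Q i * ln (cell_prob f Q i)) = hdiff + Hn.
Proof.
  rewrite fsum_minus. rewrite sum_RInt. unfold Hn, hdiff.
  rewrite (fsum_ext _ (fun i => - (cell_prob f Q i * ln (cell_prob f Q i))) (fun i => -1 * (cell_prob f Q i * ln (cell_prob f Q i)))).
  rewrite fsum_scal. unfold cell_prob. lra. intros; lra.
  apply (ex_flnf f a b hB); pose proof (hab f a b hA); lra.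
Qed.

End Quant.

Lemma RInt_sq c s t : RInt (fun x => (x - c) ^ 2) s t = ((t - c) ^ 3 - (s - c) ^ 3) / 3.
Proof.
  apply is_RInt_unique.
  replace (((t - c) ^ 3 - (s - c) ^ 3) / 3) with (minus ((fun x => (x - c) ^ 3 / 3) t) ((fun x => (x - c) ^ 3 / 3) s))
    by (unfold minus, plus, opp; simpl; field).
  apply (@is_RInt_derive R_CompleteNormedModule (fun x => (x - c) ^ 3 / 3) (fun x => (x - c) ^ 2) s t).
  - intros. auto_derive. auto. simpl. field.
  - intros. apply cont_of_der. auto_derive. auto.
Qed.

Lemma exRI_cont (g : R -> R) s t : (forall x, continuous g x) -> ex_RInt g s t.
Proof. intros. apply (@ex_RInt_continuous R_CompleteNormedModule). auto. Qed.

Lemma name_R (x : R) : {y : R | y = x}.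
Proof. exists x; auto. Qed.

Lemma pos_quad lam u : 0 < lam -> 1 + lam * (u * (u * 1)) <> 0.
Proof. intros. apply Rgt_not_eq. assert (0 <= u * u) by apply Rle_0_sqr. nra. Qed.

Lemma RInt_cauchy lam c s t : 0 < lam -> s <= t ->
  RInt (fun x => / (1 + lam * (x - c) ^ 2)) s t <= PI / sqrt lam.
Proof.
  intros Hl Hst. set (q := sqrt lam). assert (Hq : 0 < q) by (apply sqrt_lt_R0; auto).
  assert (Hqq : q * q = lam) by (apply sqrt_sqrt; lra).
  rewrite (is_RInt_unique _ _ _ ((atan (q * (t - c)) - atan (q * (s - c))) / q)).
  - pose proof (atan_bound (q * (t - c))). pose proof (atan_bound (q * (s - c))).
    unfold Rdiv. apply Rmult_le_compat_r. left; apply Rinv_0_lt_compat; auto. lra.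
  - replace ((atan (q * (t - c)) - atan (q * (s - c))) / q) with
      (minus ((fun x => / q * atan (q * (x - c))) t) ((fun x => / q * atan (q * (x - c))) s))
      by (unfold minus, plus, opp; simpl; field; lra).
    apply (@is_RInt_derive R_CompleteNormedModule (fun x => / q * atan (q * (x - c))) (fun x => / (1 + lam * (x - c) ^ 2)) s t).
    + intros x _.
      assert (Hin : is_derive (fun x => q * (x - c)) x q). { auto_derive. exact I. apply Rmult_1_r. }
      pose proof (is_derive_comp atan (fun x => q * (x - c)) x _ _ (is_derive_atan _) Hin) as Hc.
      replace (/ (1 + lam * (x - c) ^ 2)) with (/ q * scal q (/ (1 + (q * (x - c))²))).
      apply (is_derive_scal (fun x => atan (q * (x - c)))). exact Hc.
      unfold scal; simpl; unfold mult; simpl. rewrite <- Hqq. unfold Rsqr. field.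
      assert (Hz2 : q <> 0) by (apply Rgt_not_eq; lra). assert (Hxc : 0 <= (x - c) * (x - c)) by (apply Rle_0_sqr). assert (Hz1 : 0 < 1 + q * q * ((x - c) * (x - c))). { rewrite Hqq. apply Rplus_lt_le_0_compat. lra. apply Rmult_le_pos; lra. } split; [apply Rgt_not_eq; exact Hz1 | exact Hz2].
    + intros. apply cont_of_der. auto_derive. apply pos_quad; auto.
Qed.

Section Cells.
Variables (f : R -> R) (a b : R).
Hypothesis hA : condA f a b.
Hypothesis hB : condB f a b.

Lemma ex_poly2 s t c : a <= s -> s <= t -> t <= b -> ex_RInt (fun x => (x - c) ^ 2 * f x) s t.
Proof. intros. apply (ex_gf f a b hA); auto. intros; apply cont_of_der; auto_derive; auto. Qed.

Lemma T_ge_unif s t : a <= s -> s < t -> t <= b ->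
  - (RInt f s t) * ln (t - s) <= RInt (fun x => f x * ln (f x)) s t - RInt f s t * ln (RInt f s t).
Proof.
  intros H1 H2 H3. destruct (name_R (RInt f s t)) as [p Hpd]. rewrite <- Hpd.
  assert (Hp : 0 < p) by (rewrite Hpd; apply (pos_int f a b hA); auto).
  destruct (name_R (t - s)) as [D HD].
  assert (RInt (fun x => f x * (ln (p / D) + 1) - p / D) s t <= RInt (fun x => f x * ln (f x)) s t).
  { apply RI_le. lra. apply exRI_minus. apply (exRI_ext (fun x => (ln (p/D)+1) * f x)). lra. intros; ring.
    apply exRI_scal. apply (ex_f f a b hA); lra. apply exRI_const.
    apply (ex_flnf f a b hB); lra.
    intros. pose proof (gibbs_pt (f x) (p / D) (f_nonneg f a b hA x) ltac:(apply Rdiv_lt_0_compat; lra)). lra. }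
  rewrite RI_minus, RI_const in H. rewrite (RI_ext _ (fun x => (ln (p / D) + 1) * f x)) in H.
  rewrite RI_scal in H. rewrite <- Hpd in H. unfold Rdiv in H. rewrite ln_mult in H. rewrite ln_Rinv in H.
  assert (p * / D * (t - s) = p) by (rewrite <- HD; field; apply Rgt_not_eq; lra). rewrite <- HD. nra.
  lra. auto. apply Rinv_0_lt_compat; lra.
  apply (ex_f f a b hA); lra. lra. intros; ring.
  apply (exRI_ext (fun x => (ln (p/D)+1) * f x)). lra. intros; ring.
  apply exRI_scal. apply (ex_f f a b hA); lra. apply exRI_const.
Qed.

Lemma sq_int_ge c s t : s <= t -> (t - s) ^ 3 / 12 <= RInt (fun x => (x - c) ^ 2) s t.
Proof.
  intros. rewrite RInt_sq.
  assert (0 <= (t - s) * (3 * ((t - c) + (s - c)) ^ 2 / 4)) by (apply Rmult_le_pos; [lra| pose proof (pow2_ge_0 ((t - c) + (s - c))); lra]).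
  replace (((t - c) ^ 3 - (s - c) ^ 3) / 3) with ((t - s) ^ 3 / 12 + (t - s) * (3 * ((t - c) + (s - c)) ^ 2 / 4) / 3) by field. lra.
Qed.

Lemma D_ge_lo s t c lo : a <= s -> s < t -> t <= b -> 0 <= lo ->
  (forall x, s < x < t -> lo <= f x) ->
  lo * ((t - s) ^ 3 / 12) <= RInt (fun x => (x - c) ^ 2 * f x) s t.
Proof.
  intros H1 H2 H3 Hlo Hf.
  apply Rle_trans with (RInt (fun x => lo * (x - c) ^ 2) s t).
  rewrite RI_scal. apply Rmult_le_compat_l; auto. apply sq_int_ge; lra.
  apply exRI_cont. intros; apply cont_of_der; auto_derive; auto.
  apply RI_le. lra. apply exRI_scal, exRI_cont. intros; apply cont_of_der; auto_derive; auto.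
  apply ex_poly2; lra.
  intros. specialize (Hf x H). pose proof (pow2_ge_0 (x - c)). nra.
Qed.

Lemma p_le_hi s t hi : a <= s -> s <= t -> t <= b -> (forall x, s < x < t -> f x <= hi) ->
  RInt f s t <= hi * (t - s).
Proof.
  intros. rewrite <- RI_const. apply RI_le; auto. apply (ex_f f a b hA); lra. apply exRI_const.
Qed.

Lemma cell_good s t c lo hi r mu : a <= s -> s < t -> t <= b -> 0 < lo -> 0 <= r -> 0 < mu ->
  (forall x, s < x < t -> lo <= f x <= hi) -> hi <= (1 + r) * lo ->
  / 2 * RInt f s t * ln mu + / 2 * RInt f s t - 6 * mu * (1 + r) * RInt (fun x => (x - c) ^ 2 * f x) s t
  <= RInt (fun x => f x * ln (f x)) s t - RInt f s t * ln (RInt f s t).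
Proof.
  intros H1 H2 H3 Hlo Hr Hmu Hf Hhi.
  pose proof (T_ge_unif s t H1 H2 H3) as HT.
  pose proof (D_ge_lo s t c lo H1 H2 H3 ltac:(lra) ltac:(intros; apply Hf; auto)) as HD.
  pose proof (p_le_hi s t hi H1 ltac:(lra) H3 ltac:(intros; apply Hf; auto)) as Hp.
  destruct (name_R (RInt f s t)) as [p Hpd]. rewrite <- Hpd in *.
  destruct (name_R (RInt (fun x => (x - c) ^ 2 * f x) s t)) as [D HDd]. rewrite <- HDd in *.
  assert (Hpp : 0 < p) by (rewrite Hpd; apply (pos_int f a b hA); auto).
  set (L := t - s) in *. assert (HL : 0 < L) by (unfold L; lra). clearbody L.
  assert (Hm : 0 < mu * (L * L)) by (apply Rmult_lt_0_compat; nra).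
  pose proof (ln_le_sub1 _ Hm) as Hln. rewrite !ln_mult in Hln by nra.
  assert (Hq : p * (L * L) <= 12 * (1 + r) * D).
  { assert (p * (L * L) <= hi * L * (L * L)) by (apply Rmult_le_compat_r; nra).
    assert (hi * L * (L * L) <= (1 + r) * lo * L * (L * L)).
    { apply Rmult_le_compat_r. nra. apply Rmult_le_compat_r; lra. }
    replace (lo * (L ^ 3 / 12)) with (lo * L * (L * L) / 12) in HD by field. nra. }
  assert (p * ln mu + 2 * p * ln L <= p * (mu * (L * L)) - p) by nra.
  nra.
Qed.

Lemma cell_bad s t c lam : a <= s -> s < t -> t <= b -> 0 < lam ->
  / 2 * RInt f s t * ln lam - RInt f s t * ln PI - lam * RInt (fun x => (x - c) ^ 2 * f x) s t
  <= RInt (fun x => f x * ln (f x)) s t - RInt f s t * ln (RInt f s t).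
Proof.
  intros H1 H2 H3 Hl.
  assert (Hp : 0 < RInt f s t) by (apply (pos_int f a b hA); auto).
  destruct (name_R (RInt f s t)) as [p Hpd]. rewrite <- Hpd in *.
  set (k := sqrt lam / PI). assert (Hsq : 0 < sqrt lam) by (apply sqrt_lt_R0; auto).
  assert (Hk : 0 < k) by (unfold k; apply Rdiv_lt_0_compat; auto; apply PI_RGT_0).
  assert (HI := RInt_cauchy lam c s t Hl ltac:(lra)).
  assert (Hex1 : ex_RInt (fun x => / (1 + lam * (x - c) ^ 2)) s t).
  { apply exRI_cont. intros; apply cont_of_der; auto_derive. apply pos_quad; auto. }
  assert (Hex2 : ex_RInt (fun x => (x - c) ^ 2 * f x) s t) by (apply ex_poly2; lra).
  assert (Hexf : ex_RInt f s t) by (apply (ex_f f a b hA); lra).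
  assert (Hmain : RInt (fun x => (ln p + ln k + 1) * f x - lam * ((x - c) ^ 2 * f x) - p * k * / (1 + lam * (x - c) ^ 2)) s t
      <= RInt (fun x => f x * ln (f x)) s t).
  { apply RI_le. lra. apply exRI_minus. apply exRI_minus. apply exRI_scal; auto. apply exRI_scal; auto.
    apply exRI_scal; auto. apply (ex_flnf f a b hB); lra.
    intros x Hx. pose proof (f_nonneg f a b hA x) as Hf0.
    assert (Hq : 0 < 1 + lam * (x - c) ^ 2) by (pose proof (pow2_ge_0 (x - c)); nra).
    assert (HG : 0 < p * k * / (1 + lam * (x - c) ^ 2)) by (apply Rmult_lt_0_compat; [nra| apply Rinv_0_lt_compat; auto]).
    pose proof (gibbs_pt (f x) _ Hf0 HG) as Hg.
    rewrite !ln_mult in Hg by (try apply Rinv_0_lt_compat; nra). rewrite ln_Rinv in Hg by auto.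
    pose proof (ln_le_sub1 _ Hq). nra. }
  rewrite !RI_minus, !RI_scal in Hmain; auto; try (apply exRI_scal; auto); try (apply exRI_minus; apply exRI_scal; auto).
  rewrite <- Hpd in Hmain.
  assert (p * k * RInt (fun x => / (1 + lam * (x - c) ^ 2)) s t <= p).
  { apply Rle_trans with (p * k * (PI / sqrt lam)). apply Rmult_le_compat_l; nra.
    unfold k. right. field. split; apply Rgt_not_eq; auto. apply PI_RGT_0. }
  assert (Hlk : ln k = / 2 * ln lam - ln PI).
  { unfold k, Rdiv. rewrite ln_mult, ln_Rinv; auto. 2: apply PI_RGT_0. 2: apply Rinv_0_lt_compat, PI_RGT_0.
    replace (ln lam) with (ln (sqrt lam * sqrt lam)) by (rewrite sqrt_sqrt; auto; lra).
    rewrite ln_mult; auto. lra. }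
  rewrite Hlk in Hmain. nra.
Qed.

Lemma long_cell s t c M : a <= s -> s < t -> t <= b -> 0 < M -> (forall x, f x <= M) ->
  RInt f s t ^ 3 <= 8 * PI ^ 2 * M ^ 2 * RInt (fun x => (x - c) ^ 2 * f x) s t.
Proof.
  intros H1 H2 H3 HM HfM.
  assert (Hp : 0 < RInt f s t) by (apply (pos_int f a b hA); auto).
  destruct (name_R (RInt f s t)) as [p Hpd]. rewrite <- Hpd in *.
  assert (HPI := PI_RGT_0).
  set (r := p / (2 * PI * M)). assert (Hr : 0 < r) by (unfold r; apply Rdiv_lt_0_compat; nra).
  set (lam := / (r * r)). assert (Hl : 0 < lam) by (unfold lam; apply Rinv_0_lt_compat; nra).
  assert (HI := RInt_cauchy lam c s t Hl ltac:(lra)).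
  assert (Hsl : sqrt lam = / r). { unfold lam. rewrite sqrt_inv. rewrite sqrt_square; lra. }
  rewrite Hsl in HI.
  assert (Hex1 : ex_RInt (fun x => / (1 + lam * (x - c) ^ 2)) s t).
  { apply exRI_cont. intros; apply cont_of_der; auto_derive. apply pos_quad; auto. }
  assert (Hex2 : ex_RInt (fun x => (x - c) ^ 2 * f x) s t) by (apply ex_poly2; lra).
  assert (Hexf : ex_RInt f s t) by (apply (ex_f f a b hA); lra).
  assert (Hmain : RInt (fun x => (r * r) * f x - (M * (r * r)) * / (1 + lam * (x - c) ^ 2)) s t
     <= RInt (fun x => (x - c) ^ 2 * f x) s t).
  { apply RI_le. lra. apply exRI_minus; apply exRI_scal; auto. auto.
    intros x Hx. pose proof (f_nonneg f a b hA x) as Hf0. specialize (HfM x).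
    assert (Hu := pow2_ge_0 (x - c)). set (u2 := (x - c) ^ 2) in *.
    assert (Hq : 0 < 1 + lam * u2) by nra.
    assert (Hid : (M * (r * r)) * / (1 + lam * u2) = M * (r * r) * (r * r) / (r * r + u2)).
    { unfold lam. field. split; apply Rgt_not_eq; nra. }
    rewrite Hid. 
    assert (M * (r * r) * (r * r) / (r * r + u2) >= (r * r - u2) * f x).
    { destruct (Rle_dec u2 (r * r)).
      - apply Rle_ge. apply Rle_trans with ((r * r - u2) * M). apply Rmult_le_compat_l; lra.
        apply Rmult_le_reg_r with (r * r + u2). nra. unfold Rdiv. replace (M * (r * r) * (r * r) * / (r * r + u2) * (r * r + u2)) with (M * (r * r) * (r * r)) by (field; apply Rgt_not_eq; nra).
        assert (0 <= u2 * u2) by nra. nra.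
      - apply Rle_ge. apply Rle_trans with 0. nra. unfold Rdiv. apply Rmult_le_pos. apply Rmult_le_pos; nra. apply Rlt_le, Rinv_0_lt_compat; nra. }
    lra. }
  rewrite RI_minus, !RI_scal in Hmain; auto; try (apply exRI_scal; auto).
  rewrite <- Hpd in Hmain.
  assert (M * (r * r) * RInt (fun x => / (1 + lam * (x - c) ^ 2)) s t <= M * (r * r) * (PI / / r)) by (apply Rmult_le_compat_l; nra).
  assert (Hpr : PI * M * r = p / 2) by (unfold r; field; split; apply Rgt_not_eq; lra).
  replace (PI / / r) with (PI * r) in H by (field; apply Rgt_not_eq; lra).
  assert (Hrr : p ^ 3 = 8 * PI ^ 2 * M ^ 2 * (r * r * (p / 2))) by (unfold r; field; split; apply Rgt_not_eq; lra).
  rewrite Hrr. apply Rmult_le_compat_l. nra. nra.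
Qed.

Lemma unif_cell s t c eta : a <= s -> s < t -> t <= b -> 0 < eta ->
  (forall x y, s <= x <= t -> s <= y <= t -> Rabs (f x - f y) < eta) ->
  c = (s + t) / 2 ->
  RInt (fun x => f x * ln (f x)) s t - RInt f s t * ln (RInt f s t) <= eta * (t - s) - RInt f s t * ln (t - s) /\ RInt (fun x => (x - c) ^ 2 * f x) s t <= (RInt f s t + eta * (t - s)) * (t - s) ^ 2 / 12.
Proof.
  intros H1 H2 H3 He Hu Hc.
  assert (Hp : 0 < RInt f s t) by (apply (pos_int f a b hA); auto).
  assert (Hexf : ex_RInt f s t) by (apply (ex_f f a b hA); lra).
  assert (HK : forall x, s < x < t -> f x * (t - s) <= RInt f s t + eta * (t - s)).
  { intros x Hx. rewrite <- RI_const, <- RI_const, <- RI_plus; auto. apply RI_le. lra. apply exRI_const.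
    apply exRI_plus; auto. apply exRI_const. intros y Hy. specialize (Hu x y ltac:(lra) ltac:(lra)).
    unfold Rabs in Hu; destruct Rcase_abs in Hu; lra. apply exRI_const. }
  destruct (name_R (RInt f s t)) as [p Hpd]. rewrite <- Hpd in *.
  set (L := t - s) in *. assert (HL : 0 < L) by (unfold L; lra).
  set (K := (p + eta * L) / L). assert (HK0 : 0 < K) by (unfold K; apply Rdiv_lt_0_compat; nra).
  assert (HfK : forall x, s < x < t -> f x <= K).
  { intros. unfold K. apply Rmult_le_reg_r with L; auto. unfold Rdiv; rewrite Rmult_assoc, Rinv_l, Rmult_1_r by (apply Rgt_not_eq; lra).
    apply HK; auto. }
  split.
  - assert (RInt (fun x => f x * ln (f x)) s t <= RInt (fun x => ln K * f x) s t).
    { apply RI_le. lra. apply (ex_flnf f a b hB); lra. apply exRI_scal; auto.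
      intros. rewrite (Rmult_comm (ln K)). apply yln_le; auto. split. apply (f_nonneg f a b hA). auto. }
    rewrite RI_scal in H by auto. rewrite <- Hpd in H.
    assert (Hl : ln K = ln (p + eta * L) - ln L).
    { unfold K, Rdiv. assert (0 < p + eta * L) by nra. rewrite ln_mult, ln_Rinv; try lra. apply Rinv_0_lt_compat; lra. }
    assert (Hl2 : ln (p + eta * L) - ln p <= eta * L / p).
    { replace (ln (p + eta * L) - ln p) with (ln ((p + eta * L) / p)).
      pose proof (ln_le_sub1 ((p + eta * L) / p) ltac:(apply Rdiv_lt_0_compat; nra)).
      replace ((p + eta * L) / p - 1) with (eta * L / p) in H0 by (field; apply Rgt_not_eq; lra). auto.
      unfold Rdiv. assert (0 < p + eta * L) by nra. rewrite ln_mult, ln_Rinv; try lra. apply Rinv_0_lt_compat; lra. }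
    assert (p * (ln (p + eta * L) - ln p) <= eta * L).
    { apply Rle_trans with (p * (eta * L / p)). apply Rmult_le_compat_l; lra. right; field; apply Rgt_not_eq; lra. }
    rewrite Hl in H. nra.
  - apply Rle_trans with (RInt (fun x => K * (x - c) ^ 2) s t).
    apply RI_le. lra. apply ex_poly2; lra. apply exRI_scal, exRI_cont. intros; apply cont_of_der; auto_derive; auto.
    intros. rewrite Rmult_comm. apply Rmult_le_compat_r. apply pow2_ge_0. apply HfK; auto.
    rewrite RI_scal, RInt_sq. unfold K. subst c. right. unfold L. field. apply Rgt_not_eq; lra.
    apply exRI_cont. intros; apply cont_of_der; auto_derive; auto.
Qed.

End Cells.

Lemma ceil_nat_spec x : 0 < x -> x <= INR (ceil_nat x) < x + 1 /\ (1 <= ceil_nat x)%nat.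
Proof.
  intros Hx. unfold ceil_nat. destruct (base_Int_part (- x)) as [H1 H2].
  set (z := (- Int_part (- x))%Z).
  assert (Hz : IZR z = - IZR (Int_part (- x))) by (unfold z; rewrite opp_IZR; auto).
  assert (0 < IZR z) by lra. apply lt_0_IZR in H.
  rewrite INR_IZR_INZ, Z2Nat.id by lia. split. lra.
  apply (Nat.le_trans _ (Z.to_nat 1)). simpl; lia. apply Z2Nat.inj_le; lia.
Qed.

Section Uni.
Variables (a b delta : R).
Hypothesis hab : a < b.
Hypothesis hd : 0 < delta.

Let N := ceil_nat ((b - a) / delta).

Lemma N_spec : (b - a) <= INR N * delta < (b - a) + delta /\ (1 <= N)%nat.
Proof.
  destruct (ceil_nat_spec ((b - a) / delta)) as [[H1 H2] H3]. apply Rdiv_lt_0_compat; lra.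
  fold N in H1, H2, H3. split; auto.
  assert (Hd : (b - a) / delta * delta = b - a) by (field; apply Rgt_not_eq; lra).
  split; nra.
Qed.

Lemma quni_N : qN (Q_uni a b delta) = N. Proof. reflexivity. Qed.

Lemma quni_lt i : (i < N)%nat -> a + INR i * delta < b.
Proof.
  intros Hi. destruct N_spec as [[H1 H2] _].
  assert (INR i + 1 <= INR N) by (rewrite <- S_INR; apply le_INR; lia).
  assert (HH: (INR i + 1) * delta <= INR N * delta) by (apply Rmult_le_compat_r; lra).
  assert ((b - a) / delta * delta = b - a) by (field; apply Rgt_not_eq; lra).
  destruct (ceil_nat_spec ((b - a) / delta)) as [[H5 H6] _]. apply Rdiv_lt_0_compat; lra.
  fold N in H5, H6.
  assert (INR i < (b - a) / delta) by lra.
  assert (INR i * delta < (b - a) / delta * delta) by (apply Rmult_lt_compat_r; lra). lra.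
Qed.

Lemma quni_valid : valid_quantizer a b (Q_uni a b delta).
Proof.
  unfold valid_quantizer, Q_uni; cbn [qa qc qN]. fold N. destruct N_spec as [[H1 H2] H3].
  split; auto. split. rewrite Rmult_0_l, Rplus_0_r. apply Rmin_left; lra.
  split. apply Rmin_right; lra.
  intros i Hi. rewrite (Rmin_left (a + INR i * delta)) by (pose proof (quni_lt i Hi); lra).
  rewrite S_INR. pose proof (quni_lt i Hi). unfold Rmin; destruct Rle_dec; lra.
Qed.

Lemma quni_len i : (i < N)%nat -> qa (Q_uni a b delta) (S i) - qa (Q_uni a b delta) i <= delta.
Proof.
  intros Hi. unfold Q_uni; cbn [qa qc qN]. rewrite (Rmin_left (a + INR i * delta)) by (pose proof (quni_lt i Hi); lra).
  rewrite S_INR. unfold Rmin; destruct Rle_dec; pose proof (quni_lt i Hi); lra.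
Qed.

Lemma quni_mid i : qc (Q_uni a b delta) i = (qa (Q_uni a b delta) i + qa (Q_uni a b delta) (S i)) / 2.
Proof. reflexivity. Qed.

End Uni.

Definition Cc := / 2 + ln PI.

Lemma ln_ge0 x : 1 <= x -> 0 <= ln x.
Proof. intros. rewrite <- ln_1. apply ln_le; lra. Qed.

Lemma PI_gt1 : 1 < PI. Proof. pose proof PI2_3_2; lra. Qed.

Lemma Cc_pos : 0 < Cc.
Proof. unfold Cc. pose proof (ln_ge0 PI ltac:(pose proof PI_gt1; lra)). lra. Qed.

Lemma fsum_lin3 N A B E (p q w : nat -> R) :
  fsum N (fun i => A * p i + B * q i + E * w i) = A * fsum N p + B * fsum N q + E * fsum N w.
Proof. induction N; cbn [fsum]. lra. rewrite IHN. lra. Qed.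

Section Bounds.
Variables (f : R -> R) (a b : R).
Hypothesis hA : condA f a b.
Hypothesis hB : condB f a b.

Definition unif_prop eta d0 := forall x y, a <= x <= b -> a <= y <= b -> Rabs (x - y) < d0 -> Rabs (f x - f y) < eta.

Lemma lower_bound Q M th eta d0 e1 U : valid_quantizer a b Q ->
  1 <= M -> (forall x, f x <= M) -> 0 < th -> 0 < eta -> 0 < d0 -> unif_prop eta d0 ->
  0 < e1 -> 0 < U -> distortion f Q <= U -> 8 * PI ^ 2 * M ^ 2 * U <= e1 ^ 3 ->
  - / 2 * ln (12 * (1 + 2 * eta / th) * U) - Cc * ((th + 2 * eta) + e1 / d0) * (b - a)
  <= hdiff f a b + Hn f Q.
Proof.
  intros hQ HM1 HM Hth Het Hd0 Hu He1 HU HDU He1U.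
  set (r := 2 * eta / th). assert (Hr : 0 <= r) by (unfold r; apply Rlt_le, Rdiv_lt_0_compat; lra).
  set (mu := / (12 * (1 + r) * U)). assert (Hmu : 0 < mu) by (unfold mu; apply Rinv_0_lt_compat; nra).
  assert (HC := Cc_pos).
  assert (Hcell : forall i, (i < qN Q)%nat ->
    (/ 2 * ln mu + / 2) * cell_prob f Q i + (- (6 * mu * (1 + r))) * Dcell f Q i
      + (- (Cc * ((th + 2 * eta) + e1 / d0))) * (qa Q (S i) - qa Q i)
    <= RInt (fun x => f x * ln (f x)) (qa Q i) (qa Q (S i)) - cell_prob f Q i * ln (cell_prob f Q i)).
  { intros i Hi. destruct (cell_in a b Q hQ i Hi) as [Hs [Hst Ht]].
    unfold cell_prob, Dcell.
    set (s := qa Q i) in *. set (t := qa Q (S i)) in *. set (c := qc Q i).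
    assert (Hp : 0 < RInt f s t) by (apply (pos_int f a b hA); auto).
    assert (Hsmall : 0 <= (th + 2 * eta) + e1 / d0) by (assert (0 < e1 / d0) by (apply Rdiv_lt_0_compat; lra); lra).
    assert (HD0 : 0 <= RInt (fun x => (x - c) ^ 2 * f x) s t) by (apply (Dcell_nonneg f a b hA Q hQ i Hi)).
    destruct (Rlt_dec (t - s) d0) as [Hshort|Hlong]; [destruct (Rle_dec (th + eta) (f s)) as [Hbig|Hsm]|].
    -
      pose proof (cell_good f a b hA hB s t c (f s - eta) (f s + eta) r mu Hs Hst Ht ltac:(lra) Hr Hmu) as G.
      assert (Hin : forall x, s < x < t -> f s - eta <= f x <= f s + eta).
      { intros x Hx. assert (Rabs (f x - f s) < eta) by (apply Hu; try lra; unfold Rabs; destruct Rcase_abs; lra).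
        unfold Rabs in H; destruct Rcase_abs in H; lra. }
      specialize (G Hin).
      assert (f s + eta <= (1 + r) * (f s - eta)).
      { unfold r. assert (2 * eta / th * (f s - eta) >= 2 * eta).
        { unfold Rdiv. apply Rle_ge. apply Rmult_le_reg_r with th; auto.
          replace (2 * eta * / th * (f s - eta) * th) with (2 * eta * (f s - eta)) by (field; apply Rgt_not_eq; lra). nra. }
        lra. }
      specialize (G H).
      assert (0 <= Cc * ((th + 2 * eta) + e1 / d0) * (t - s)) by (apply Rmult_le_pos; [apply Rmult_le_pos|]; lra).
      nra.
    -
      assert (Hpb : RInt f s t <= (th + 2 * eta) * (t - s)).
      { apply (p_le_hi f a b hA); try lra. intros x Hx.
        assert (Rabs (f x - f s) < eta) by (apply Hu; try lra; unfold Rabs; destruct Rcase_abs; lra).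
        unfold Rabs in H; destruct Rcase_abs in H; lra. }
      set (lam := 6 * mu * (1 + r)). assert (Hl : 0 < lam) by (unfold lam; nra).
      pose proof (cell_bad f a b hA hB s t c lam Hs Hst Ht Hl) as G.
      assert (ln mu <= ln lam).
      { apply ln_le; auto. unfold lam. nra. }
      assert (Hp2 : RInt f s t <= (th + 2 * eta + e1 / d0) * (t - s)).
      { assert (0 <= e1 / d0 * (t - s)) by (apply Rmult_le_pos; [apply Rlt_le, Rdiv_lt_0_compat|]; lra). nra. }
      fold lam. unfold Cc in *.
      assert (RInt f s t * ln PI <= (/2 + ln PI) * (th + 2 * eta + e1 / d0) * (t - s) - / 2 * RInt f s t).
      { pose proof (ln_ge0 PI ltac:(pose proof PI_gt1; lra)). nra. }
      nra.
    -
      assert (Hp3 : RInt f s t ^ 3 <= e1 ^ 3).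
      { pose proof (long_cell f a b hA s t c M Hs Hst Ht ltac:(lra) HM).
        pose proof (Dcell_le_dist f a b hA Q hQ i Hi). unfold Dcell in H0. fold s t c in H0.
        assert (8 * PI ^ 2 * M ^ 2 * RInt (fun x => (x - c) ^ 2 * f x) s t <= 8 * PI ^ 2 * M ^ 2 * U).
        { apply Rmult_le_compat_l. pose proof PI_RGT_0; nra. lra. }
        lra. }
      assert (Hpe : RInt f s t <= e1).
      { destruct (Rle_dec (RInt f s t) e1); auto. exfalso.
        destruct (name_R (RInt f s t)) as [pp Hpp]. rewrite <- Hpp in *. assert (e1 ^ 3 < pp ^ 3) by (simpl; assert (e1 * e1 < pp * pp) by nra; nra). lra. }
      assert (Hp2 : RInt f s t <= (th + 2 * eta + e1 / d0) * (t - s)).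
      { assert (e1 <= e1 / d0 * (t - s)).
        { unfold Rdiv. replace e1 with (e1 * / d0 * d0) at 1 by (field; apply Rgt_not_eq; lra).
          apply Rmult_le_compat_l. apply Rlt_le, Rmult_lt_0_compat; [lra| apply Rinv_0_lt_compat; lra]. lra. }
        assert (0 <= (th + 2 * eta) * (t - s)) by (apply Rmult_le_pos; lra). nra. }
      set (lam := 6 * mu * (1 + r)). assert (Hl : 0 < lam) by (unfold lam; nra).
      pose proof (cell_bad f a b hA hB s t c lam Hs Hst Ht Hl) as G.
      assert (ln mu <= ln lam).
      { apply ln_le; auto. unfold lam. nra. }
      fold lam. unfold Cc in *.
      assert (RInt f s t * ln PI <= (/2 + ln PI) * (th + 2 * eta + e1 / d0) * (t - s) - / 2 * RInt f s t).
      { pose proof (ln_ge0 PI ltac:(pose proof PI_gt1; lra)). nra. }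
      nra. }
  pose proof (fsum_le _ _ _ Hcell) as Hs. rewrite fsum_lin3 in Hs.
  rewrite (T_sum f a b hA hB Q hQ) in Hs.
  rewrite (sum_p f a b hA Q hQ), (sum_len a b Q hQ) in Hs.
  fold (distortion f Q) in Hs.
  change (fsum (qN Q) (Dcell f Q)) with (distortion f Q) in Hs.
  assert (Hmm : 6 * mu * (1 + r) * distortion f Q <= / 2).
  { apply Rle_trans with (6 * mu * (1 + r) * U). apply Rmult_le_compat_l; [nra| lra].
    unfold mu. right. field. split; apply Rgt_not_eq; lra. }
  assert (Hlm : ln mu = - ln (12 * (1 + r) * U)) by (unfold mu; apply ln_Rinv; nra).
  rewrite Hlm in Hs. unfold r in *. nra.
Qed.

Lemma upper_bound delta M eta d0 : 0 < delta -> delta < d0 -> 0 < eta -> unif_prop eta d0 ->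
  1 <= M -> (forall x, f x <= M) ->
  hdiff f a b + Hn f (Q_uni a b delta) <= eta * (b - a) - ln delta + M * delta /\
  distortion f (Q_uni a b delta) <= delta ^ 2 / 12 * (1 + eta * (b - a)).
Proof.
  intros Hd Hdd He Hu HM1 HM.
  pose proof (hab f a b hA) as Hab.
  set (Q := Q_uni a b delta).
  assert (hQ : valid_quantizer a b Q) by (apply quni_valid; auto).
  destruct (N_spec a b delta Hab Hd) as [[HN1 HN2] HN3].
  assert (Hcell : forall i, (i < qN Q)%nat ->
     RInt (fun x => f x * ln (f x)) (qa Q i) (qa Q (S i)) - cell_prob f Q i * ln (cell_prob f Q i)
       <= (- ln delta) * cell_prob f Q i + (eta - M) * (qa Q (S i) - qa Q i) + (M * delta) * 1 /\
     Dcell f Q i <= (delta ^ 2 / 12) * cell_prob f Q i + (delta ^ 2 * eta / 12) * (qa Q (S i) - qa Q i) + 0 * 1).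
  { intros i Hi. destruct (cell_in a b Q hQ i Hi) as [Hs [Hst Ht]].
    assert (Hlen : qa Q (S i) - qa Q i <= delta) by (apply quni_len; auto).
    unfold cell_prob, Dcell.
    pose proof (quni_mid a b delta i) as Hmid. fold Q in Hmid.
    set (s := qa Q i) in *. set (t := qa Q (S i)) in *. set (c := qc Q i) in *.
    assert (Hp : 0 < RInt f s t) by (apply (pos_int f a b hA); auto).
    destruct (unif_cell f a b hA hB s t c eta Hs Hst Ht He) as [H1 H2].
    { intros x y Hx Hy. apply Hu; try lra. unfold Rabs; destruct Rcase_abs; lra. }
    auto.
    assert (HpM : RInt f s t <= M * (t - s)) by (apply (p_le_hi f a b hA); try lra; intros; apply HM).
    destruct (name_R (RInt f s t)) as [p Hpd]. rewrite <- Hpd in *.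
    split.
    - assert (Hl : ln delta - ln (t - s) <= delta / (t - s) - 1).
      { replace (ln delta - ln (t - s)) with (ln (delta / (t - s))).
        apply ln_le_sub1. apply Rdiv_lt_0_compat; lra.
        unfold Rdiv. rewrite ln_mult, ln_Rinv; try lra. apply Rinv_0_lt_compat; lra. }
      assert (p * (ln delta - ln (t - s)) <= M * (delta - (t - s))).
      { apply Rle_trans with (p * (delta / (t - s) - 1)). apply Rmult_le_compat_l; lra.
        replace (p * (delta / (t - s) - 1)) with (p / (t - s) * (delta - (t - s))) by (field; apply Rgt_not_eq; lra).
        apply Rmult_le_compat_r. lra. apply Rmult_le_reg_r with (t - s). lra.
        replace (p / (t - s) * (t - s)) with p by (field; apply Rgt_not_eq; lra). lra. }
      nra.
    - assert ((p + eta * (t - s)) * (t - s) ^ 2 / 12 <= (p + eta * (t - s)) * delta ^ 2 / 12).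
      { unfold Rdiv. apply Rmult_le_compat_r. lra. apply Rmult_le_compat_l. nra.
        simpl. nra. }
      nra. }
  split.
  - assert (H := fsum_le _ _ _ (fun i Hi => proj1 (Hcell i Hi))).
    rewrite fsum_lin3 in H. rewrite (T_sum f a b hA hB Q hQ) in H.
    rewrite (sum_p f a b hA Q hQ), (sum_len a b Q hQ), fsum_const in H.
    unfold Q in H. rewrite quni_N in H. unfold Q. assert (M * (INR (ceil_nat ((b - a) / delta)) * delta) <= M * ((b - a) + delta)) by (apply Rmult_le_compat_l; lra). nra.
  - assert (H := fsum_le _ _ _ (fun i Hi => proj2 (Hcell i Hi))).
    rewrite fsum_lin3 in H.
    rewrite (sum_p f a b hA Q hQ), (sum_len a b Q hQ) in H.
    change (fsum (qN Q) (Dcell f Q)) with (distortion f Q) in H. nra.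
Qed.

End Bounds.

Lemma inf_facts (P : R -> Prop) x c : P x -> (forall y, P y -> c <= y) -> c <= inf_R P <= x.
Proof.
  intros Hx Hc. unfold inf_R. destruct (Glb_Rbar_correct P) as [Hlb Hglb].
  assert (H1 := Hlb x Hx). assert (H2 : Rbar_le c (Glb_Rbar P)) by (apply Hglb; intros y Hy; apply Hc; auto).
  destruct (Glb_Rbar P); simpl in *; try contradiction; auto.
Qed.

Lemma Rpower2_pos y : 0 < Rpower 2 y.
Proof. unfold Rpower. apply exp_pos. Qed.

Lemma ln2_pos : 0 < ln 2. Proof. pose proof ln_lt_2; lra. Qed.

Lemma fsum_pos N g : (1 <= N)%nat -> (forall i, (i < N)%nat -> 0 < g i) -> 0 < fsum N g.
Proof.
  intros HN Hg. destruct N. lia. cbn [fsum].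
  assert (0 <= fsum N g) by (apply fsum_nonneg; intros; apply Rlt_le, Hg; lia).
  specialize (Hg N ltac:(lia)). lra.
Qed.

Section Aoi.
Variables (f : R -> R) (a b : R).
Hypothesis hA : condA f a b.
Hypothesis hB : condB f a b.

Lemma AoI_lower W z Q l : valid_quantizer a b Q -> valid_code Q l -> valid_policy W z ->
  3 / 2 * (Hn f Q / ln 2) <= AoI f z Q l.
Proof.
  intros hQ [Hl Hk] Hz.
  pose proof ln2_pos as Hln2.
  set (p := cell_prob f Q).
  assert (Hp : forall i, (i < qN Q)%nat -> 0 < p i) by (intros; apply (p_pos f a b hA Q hQ); auto).
  assert (Hsp : fsum (qN Q) p = 1) by (apply (sum_p f a b hA Q hQ)).
  destruct hQ as [HN1 _].
  unfold AoI. fold p. cbv zeta.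
  set (EL := fsum (qN Q) (fun i => p i * l i)).
  set (E1 := fsum (qN Q) (fun i => p i * (l i + z (l i)))).
  set (E2 := fsum (qN Q) (fun i => p i * (l i + z (l i)) ^ 2)).
  assert (HEL : Hn f Q <= ln 2 * EL).
  { assert (Hi : forall i, (i < qN Q)%nat ->
       1 * (- (p i * ln (p i))) + 1 * p i + (-1) * Rpower 2 (- l i) <= ln 2 * (p i * l i)).
    { intros i Hi. pose proof (gibbs_pt (p i) (Rpower 2 (- l i)) (Rlt_le _ _ (Hp i Hi)) (Rpower2_pos _)).
      rewrite ln_Rpower in H. nra. }
    pose proof (fsum_le _ _ _ Hi). rewrite fsum_lin3, fsum_scal in H. unfold Hn. fold p. unfold EL. lra. }
  assert (HE1 : EL <= E1).
  { apply fsum_le. intros i Hi. assert (0 <= z (l i)) by (apply Hz; apply Rlt_le, Hl; auto).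
    pose proof (Hp i Hi). nra. }
  assert (HELpos : 0 < EL) by (apply fsum_pos; auto; intros i Hi; pose proof (Hp i Hi); pose proof (Hl i Hi); nra).
  assert (HE2 : E1 * E1 <= E2).
  { assert (0 <= fsum (qN Q) (fun i => 1 * (p i * (l i + z (l i)) ^ 2) + (-2 * E1) * (p i * (l i + z (l i))) + (E1 * E1) * p i)).
    { apply fsum_nonneg. intros i Hi. pose proof (Hp i Hi).
      assert (0 <= p i * (l i + z (l i) - E1) ^ 2) by (apply Rmult_le_pos; [lra | apply pow2_ge_0]). nra. }
    rewrite fsum_lin3 in H. fold E1 E2 in H. rewrite Hsp in H. nra. }
  assert (E2 / (2 * E1) >= E1 / 2).
  { apply Rle_ge. apply Rmult_le_reg_r with (2 * E1). lra.
    unfold Rdiv. replace (E2 * / (2 * E1) * (2 * E1)) with E2 by (field; apply Rgt_not_eq; lra). nra. }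
  assert (Hn f Q / ln 2 <= EL).
  { apply Rmult_le_reg_r with (ln 2). auto. unfold Rdiv. rewrite Rmult_assoc, Rinv_l, Rmult_1_r by (apply Rgt_not_eq; auto). lra. }
  lra.
Qed.

Lemma Hn_nonneg Q : valid_quantizer a b Q -> 0 <= Hn f Q.
Proof.
  intros hQ. apply fsum_nonneg. intros i Hi.
  pose proof (p_pos f a b hA Q hQ i Hi). pose proof (p_le1 f a b hA Q hQ i Hi).
  assert (ln (cell_prob f Q i) <= 0) by (rewrite <- ln_1; apply ln_le; lra). nra.
Qed.

Lemma p_uni_le delta M i : 0 < delta -> (forall x, f x <= M) -> (i < qN (Q_uni a b delta))%nat ->
  cell_prob f (Q_uni a b delta) i <= M * delta.
Proof.
  intros Hd HM Hi. pose proof (hab f a b hA) as Hab.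
  assert (hQ := quni_valid a b delta Hab Hd).
  destruct (cell_in a b _ hQ i Hi) as [Hs [Hst Ht]].
  assert (Hlen := quni_len a b delta Hab Hd i Hi).
  unfold cell_prob. eapply Rle_trans. apply (p_le_hi f a b hA); try lra. intros; apply HM.
  assert (0 <= M) by (specialize (HM a); pose proof (f_nonneg f a b hA a); lra).
  apply Rmult_le_compat_l; lra.
Qed.

Lemma Hn_uni_ge delta M : 0 < delta -> (forall x, f x <= M) -> 0 < M ->
  - ln (M * delta) <= Hn f (Q_uni a b delta).
Proof.
  intros Hd HM HM0. pose proof (hab f a b hA) as Hab.
  assert (hQ := quni_valid a b delta Hab Hd).
  unfold Hn. rewrite <- (Rmult_1_r (- ln (M * delta))). rewrite <- (sum_p f a b hA _ hQ).
  rewrite <- fsum_scal. apply fsum_le. intros i Hi.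
  pose proof (p_pos f a b hA _ hQ i Hi). pose proof (p_uni_le delta M i Hd HM Hi).
  assert (ln (cell_prob f (Q_uni a b delta) i) <= ln (M * delta)) by (apply ln_le; lra). nra.
Qed.

End Aoi.

Lemma tln2 t M : 0 < t <= M -> 1 <= M -> t * (ln t) ^ 2 <= 4 + M * (ln M) ^ 2.
Proof.
  intros [Ht HtM] HM.
  assert (0 <= M * (ln M) ^ 2) by (apply Rmult_le_pos; [lra| apply pow2_ge_0]).
  destruct (Rle_dec t 1).
  - set (u := sqrt t). assert (Hu : 0 < u) by (apply sqrt_lt_R0; auto).
    assert (Huu : u * u = t) by (apply sqrt_sqrt; lra).
    assert (Hlt : ln t = 2 * ln u) by (rewrite <- Huu, ln_mult; auto; ring).
    assert (Hu1 : u <= 1) by (destruct (Rle_dec u 1); auto; nra).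
    assert (Hlu : ln u <= 0) by (rewrite <- ln_1; apply ln_le; lra).
    assert (Hiu : - ln u <= / u - 1) by (rewrite <- ln_Rinv by auto; apply ln_le_sub1; apply Rinv_0_lt_compat; auto).
    assert (Hx : u * (- ln u) <= 1 - u) by (apply Rmult_le_reg_l with (/ u); [apply Rinv_0_lt_compat; auto|];
      replace (/ u * (u * - ln u)) with (- ln u) by (field; apply Rgt_not_eq; auto);
      replace (/ u * (1 - u)) with (/ u - 1) by (field; apply Rgt_not_eq; auto); lra).
    rewrite Hlt, <- Huu. assert (0 <= u * - ln u) by nra.
    assert ((u * - ln u) * (u * - ln u) <= 1) by nra. nra.
  - assert (0 <= ln t) by (apply ln_ge0; lra). assert (ln t <= ln M) by (apply ln_le; lra).
    assert (ln t ^ 2 <= ln M ^ 2) by (simpl; nra).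
    assert (t * ln t ^ 2 <= M * ln M ^ 2) by (apply Rmult_le_compat; try lra; apply pow2_ge_0). lra.
Qed.

Section Aoi2.
Variables (f : R -> R) (a b : R).
Hypothesis hA : condA f a b.
Hypothesis hB : condB f a b.

Definition Kvar M := (b - a + 1) * (4 + M * (ln M) ^ 2) / (ln 2) ^ 2.

Lemma AoI_uni_upper delta M : 0 < delta < 1 -> 1 <= M -> (forall x, f x <= M) -> M * delta < 1 ->
  AoI_opt f zero_wait (Q_uni a b delta) <=
    3 / 2 * (Hn f (Q_uni a b delta) / ln 2) + Kvar M / (2 * (Hn f (Q_uni a b delta) / ln 2)).
Proof.
  intros [Hd Hd1] HM1 HM HMd. pose proof (hab f a b hA) as Hab.
  pose proof ln2_pos as Hln2.
  set (Q := Q_uni a b delta).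
  assert (hQ : valid_quantizer a b Q) by (apply quni_valid; auto).
  set (p := cell_prob f Q).
  assert (Hp : forall i, (i < qN Q)%nat -> 0 < p i) by (intros; apply (p_pos f a b hA Q hQ); auto).
  assert (HpM : forall i, (i < qN Q)%nat -> p i <= M * delta) by (intros; apply (p_uni_le f a b hA); auto).
  assert (Hsp : fsum (qN Q) p = 1) by (apply (sum_p f a b hA Q hQ)).
  set (l := fun i => - (ln (p i) / ln 2)).
  assert (Hlpos : forall i, (i < qN Q)%nat -> 0 < l i).
  { intros i Hi. unfold l. assert (ln (p i) < 0) by (rewrite <- ln_1; apply ln_increasing; [apply Hp; auto| specialize (HpM i Hi); lra]).
    assert (ln (p i) / ln 2 < 0) by (unfold Rdiv; apply Rmult_neg_pos; [lra| apply Rinv_0_lt_compat; auto]). lra. }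
  assert (Hcode : valid_code Q l).
  { split; auto. rewrite <- Hsp. right. apply fsum_ext. intros i Hi. unfold Rpower, l.
    replace (- - (ln (p i) / ln 2) * ln 2) with (ln (p i)) by (field; apply Rgt_not_eq; auto). apply exp_ln. apply Hp; auto. }
  set (E := Hn f Q / ln 2).
  assert (HE : fsum (qN Q) (fun i => p i * l i) = E).
  { unfold E, Hn. fold p. unfold Rdiv. rewrite Rmult_comm, <- fsum_scal. apply fsum_ext. intros; unfold l; field; apply Rgt_not_eq; auto. }
  assert (HEpos : 0 < E).
  { rewrite <- HE. apply fsum_pos. apply hQ. intros i Hi. pose proof (Hp i Hi); pose proof (Hlpos i Hi); nra. }
  set (B := 4 + M * (ln M) ^ 2).
  assert (HB : 0 <= B) by (unfold B; assert (0 <= M * (ln M)^2) by (apply Rmult_le_pos; [lra| apply pow2_ge_0]); lra).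
  set (c := - ln delta / ln 2).
  assert (HE2 : fsum (qN Q) (fun i => p i * (l i + zero_wait (l i)) ^ 2) <= E * E + Kvar M).
  { unfold zero_wait. rewrite (fsum_ext _ _ (fun i => p i * l i ^ 2)) by (intros; f_equal; ring).
    assert (Hid : fsum (qN Q) (fun i => 1 * (p i * l i ^ 2) + (-2 * c) * (p i * l i) + (c * c) * p i)
             = fsum (qN Q) (fun i => p i * l i ^ 2) - 2 * c * E + c * c).
    { rewrite fsum_lin3, HE, Hsp. ring. }
    assert (Hbnd : fsum (qN Q) (fun i => 1 * (p i * l i ^ 2) + (-2 * c) * (p i * l i) + (c * c) * p i)
             <= fsum (qN Q) (fun _ => delta * B / (ln 2) ^ 2)).
    { apply fsum_le. intros i Hi.
      replace (1 * (p i * l i ^ 2) + -2 * c * (p i * l i) + c * c * p i) with (p i * (l i - c) ^ 2) by ring.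
      set (t := p i / delta).
      assert (Ht : 0 < t <= M).
      { split. apply Rdiv_lt_0_compat; auto.
        apply Rmult_le_reg_r with delta; auto. unfold t, Rdiv. rewrite Rmult_assoc, Rinv_l, Rmult_1_r by (apply Rgt_not_eq; auto). apply HpM; auto. }
      assert (Heq : p i * (l i - c) ^ 2 = delta * (t * (ln t) ^ 2) * / (ln 2) ^ 2).
      { assert (Hpi := Hp i Hi). unfold l, c, t. unfold Rdiv.
        rewrite ln_mult by (auto; apply Rinv_0_lt_compat; auto). rewrite ln_Rinv by auto.
        field. split; apply Rgt_not_eq; auto. }
      rewrite Heq. unfold Rdiv. apply Rmult_le_compat_r. apply Rlt_le, Rinv_0_lt_compat. simpl; nra.
      apply Rmult_le_compat_l. lra. apply tln2; auto. }
    rewrite fsum_const in Hbnd. rewrite Hid in Hbnd.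
    destruct (N_spec a b delta Hab Hd) as [[HN1 HN2] _].
    assert (INR (qN Q) * (delta * B / ln 2 ^ 2) <= Kvar M).
    { unfold Kvar. fold B. unfold Rdiv. rewrite <- !Rmult_assoc.
      apply Rmult_le_compat_r. apply Rlt_le, Rinv_0_lt_compat; simpl; nra.
      apply Rmult_le_compat_r. auto. unfold Q. rewrite quni_N. lra. }
    assert (0 <= (E - c) * (E - c)) by apply Rle_0_sqr. nra. }
  destruct (inf_facts (fun v => exists l0, valid_code Q l0 /\ v = AoI f zero_wait Q l0) (AoI f zero_wait Q l) 0) as [_ Hinf].
  exists l; auto.
  { intros y [l0 [Hl0 ->]]. eapply Rle_trans. 2: apply (AoI_lower f a b hA 0 zero_wait Q l0 hQ Hl0).
    pose proof (Hn_nonneg f a b hA Q hQ). apply Rmult_le_pos. lra. apply Rmult_le_pos; auto. apply Rlt_le, Rinv_0_lt_compat; auto.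
    intros x _; unfold zero_wait; lra. }
  unfold AoI_opt. fold Q. eapply Rle_trans. apply Hinf.
  unfold AoI. fold p. cbv zeta.
  rewrite (fsum_ext _ (fun i => p i * (l i + zero_wait (l i))) (fun i => p i * l i)) by (intros; unfold zero_wait; f_equal; ring).
  rewrite HE. fold E.
  assert (fsum (qN Q) (fun i => p i * (l i + zero_wait (l i)) ^ 2) / (2 * E) <= (E * E + Kvar M) / (2 * E)).
  { unfold Rdiv. apply Rmult_le_compat_r. apply Rlt_le, Rinv_0_lt_compat; lra. auto. }
  assert ((E * E + Kvar M) / (2 * E) = E / 2 + Kvar M / (2 * E)) by (field; apply Rgt_not_eq; auto).
  lra.
Qed.


End Aoi2.

Section Final.
Variables (f : R -> R) (a b W : R).
Hypothesis hA : condA f a b.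
Hypothesis hB : condB f a b.
Hypothesis hW : 0 <= W.

Lemma AoI_opt_lower z Q : valid_policy W z -> valid_quantizer a b Q ->
  3 / 2 * (Hn f Q / ln 2) <= AoI_opt f z Q.
Proof.
  intros Hz hQ. pose proof ln2_pos as Hln2.
  set (p := cell_prob f Q).
  assert (Hp : forall i, (i < qN Q)%nat -> 0 < p i) by (intros; apply (p_pos f a b hA Q hQ); auto).
  assert (Hp1 : forall i, (i < qN Q)%nat -> p i <= 1) by (intros; apply (p_le1 f a b hA Q hQ); auto).
  assert (Hsp : fsum (qN Q) p = 1) by (apply (sum_p f a b hA Q hQ)).
  set (l := fun i => - (ln (p i) / ln 2) + 1).
  assert (Hcode : valid_code Q l).
  { split.
    - intros i Hi. unfold l. assert (ln (p i) <= 0) by (rewrite <- ln_1; apply ln_le; [apply Hp| apply Hp1]; auto).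
      assert (ln (p i) / ln 2 <= 0) by (unfold Rdiv; apply Rmult_le_0_r; [lra| apply Rlt_le, Rinv_0_lt_compat; auto]). lra.
    - apply Rle_trans with (fsum (qN Q) (fun i => / 2 * p i)).
      right. apply fsum_ext. intros i Hi. unfold Rpower, l.
      replace (- (- (ln (p i) / ln 2) + 1) * ln 2) with (ln (p i) + - ln 2) by (field; apply Rgt_not_eq; auto).
      rewrite exp_plus, exp_ln by (apply Hp; auto). rewrite <- ln_Rinv by lra. rewrite exp_ln by lra. ring.
      rewrite fsum_scal, Hsp. lra. }
  destruct (inf_facts (fun v => exists l0, valid_code Q l0 /\ v = AoI f z Q l0) (AoI f z Q l) (3 / 2 * (Hn f Q / ln 2))) as [H _].
  exists l; auto.
  intros y [l0 [Hl0 ->]]. apply (AoI_lower f a b hA W z Q l0 hQ Hl0 Hz).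
  apply H.
Qed.

Lemma J_bounds delta c : 0 < delta ->
  (forall Q, valid_quantizer a b Q -> distortion f Q <= distortion f (Q_uni a b delta) -> c <= 3 / 2 * (Hn f Q / ln 2)) ->
  c <= AoI_joint_opt f a b W (distortion f (Q_uni a b delta)) <= AoI_opt f zero_wait (Q_uni a b delta).
Proof.
  intros Hd Hc. pose proof (hab f a b hA) as Hab.
  set (Dd := distortion f (Q_uni a b delta)).
  assert (hQu := quni_valid a b delta Hab Hd).
  assert (Hinner : forall z, valid_policy W z ->
    c <= inf_R (fun v => exists Q, valid_quantizer a b Q /\ distortion f Q <= Dd /\ v = AoI_opt f z Q)
      <= AoI_opt f z (Q_uni a b delta)).
  { intros z Hz. apply inf_facts. exists (Q_uni a b delta); split; auto. split; auto. unfold Dd; lra.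
    intros y [Q [hQ [HQ ->]]]. apply Rle_trans with (3 / 2 * (Hn f Q / ln 2)). apply Hc; auto. apply AoI_opt_lower; auto. }
  assert (Hz0 : valid_policy W zero_wait) by (intros x _; unfold zero_wait; lra).
  unfold AoI_joint_opt. fold Dd.
  destruct (inf_facts (fun u => exists z, valid_policy W z /\ u = inf_R (fun v => exists Q, valid_quantizer a b Q /\
                  distortion f Q <= Dd /\ v = AoI_opt f z Q))
     (inf_R (fun v => exists Q, valid_quantizer a b Q /\ distortion f Q <= Dd /\ v = AoI_opt f zero_wait Q)) c) as [H1 H2].
  exists zero_wait; auto.
  intros y [z [Hz ->]]. apply Hinner; auto.
  split; auto. eapply Rle_trans. apply H2. apply Hinner; auto.
Qed.

End Final.

Lemma le_div x y z : 0 < z -> x <= y / z -> x * z <= y.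
Proof. intros Hz H. apply Rmult_le_compat_r with (r := z) in H; [|lra].
  unfold Rdiv in H. rewrite Rmult_assoc, Rinv_l, Rmult_1_r in H by (apply Rgt_not_eq; lra). auto. Qed.

Lemma ln1p_le x : 0 <= x -> ln (1 + x) <= x.
Proof. intros. pose proof (ln_le_sub1 (1 + x) ltac:(lra)). lra. Qed.

Lemma main_est (f : R -> R) (a b W : R) : condA f a b -> condB f a b -> 0 <= W ->
  forall eps, 0 < eps -> exists d1, 0 < d1 /\ forall delta, 0 < delta < d1 ->
    0 <= AoI_opt f zero_wait (Q_uni a b delta) - AoI_joint_opt f a b W (distortion f (Q_uni a b delta)) < eps.
Proof.
  intros hA hB hW eps Heps.
  pose proof (hab f a b hA) as Hab. set (L := b - a). assert (HL : 0 < L) by (unfold L; lra).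
  pose proof Cc_pos as HC. pose proof ln2_pos as Hln2. pose proof ln_lt_2 as Hln2'.
  destruct (f_bound f a b hA) as [M [HM1 HM]].
  set (th := eps / (48 * Cc * L)). assert (Hth : 0 < th) by (unfold th; apply Rdiv_lt_0_compat; nra).
  assert (Hth' : th * (48 * Cc * L) = eps) by (unfold th; field; split; apply Rgt_not_eq; lra).
  set (eta := Rmin (Rmin (eps / (72 * L)) (eps * th / 48)) (eps / (96 * Cc * L))).
  assert (He1 : eta <= eps / (72 * L)) by (unfold eta; eapply Rle_trans; [apply Rmin_l| apply Rmin_l]).
  assert (He2 : eta <= eps * th / 48) by (unfold eta; eapply Rle_trans; [apply Rmin_l| apply Rmin_r]).
  assert (He3 : eta <= eps / (96 * Cc * L)) by (unfold eta; apply Rmin_r).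
  assert (Heta : 0 < eta).
  { unfold eta. apply Rmin_pos. apply Rmin_pos. apply Rdiv_lt_0_compat; lra. apply Rdiv_lt_0_compat; nra.
    apply Rdiv_lt_0_compat; nra. }
  apply le_div in He1; [|lra]. apply le_div in He3; [|nra].
  destruct (f_unif f a b hA eta Heta) as [d0 [Hd0 Hu]].
  set (e1 := eps * d0 / (48 * Cc * L)). assert (He1p : 0 < e1) by (unfold e1; apply Rdiv_lt_0_compat; nra).
  assert (He1' : e1 * (48 * Cc * L) = eps * d0) by (unfold e1; field; split; apply Rgt_not_eq; lra).
  set (K := Kvar a b M).
  assert (HK : 0 <= K).
  { unfold K, Kvar. apply Rmult_le_pos. apply Rmult_le_pos. fold L; lra.
    assert (0 <= M * ln M ^ 2) by (apply Rmult_le_pos; [lra| apply pow2_ge_0]). lra.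
    apply Rlt_le, Rinv_0_lt_compat. simpl; nra. }
  set (Z := 2 * K / eps + 1). assert (HZ : 1 <= Z) by (unfold Z; assert (0 <= 2 * K / eps) by (apply Rmult_le_pos; [lra| apply Rlt_le, Rinv_0_lt_compat; lra]); lra).
  assert (HZ' : 2 * K <= (Z - 1) * eps) by (unfold Z; right; field; apply Rgt_not_eq; lra).
  set (d1 := Rmin (Rmin (Rmin d0 1) (eps / (48 * M))) (Rmin (e1 ^ 3 / (8 * PI ^ 2 * M ^ 2 * (1 + eta * L))) (exp (- Z) / M))).
  assert (HPI := PI_RGT_0).
  assert (Hden : 0 < 8 * PI ^ 2 * M ^ 2 * (1 + eta * L)).
  { assert (0 < PI ^ 2) by (apply pow_lt; lra).
    assert (0 < M ^ 2) by (apply pow_lt; lra).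
    assert (0 < eta * L). { apply Rmult_lt_0_compat. exact Heta. exact HL. }
    apply Rmult_lt_0_compat.
    apply Rmult_lt_0_compat.
    apply Rmult_lt_0_compat.
    lra. lra. lra. lra. }
  exists d1. split.
  { unfold d1. apply Rmin_pos; apply Rmin_pos. apply Rmin_pos; lra. apply Rdiv_lt_0_compat; lra.
    apply Rdiv_lt_0_compat. apply pow_lt; lra. lra. apply Rdiv_lt_0_compat. apply exp_pos. lra. }
  intros delta [Hd Hdd].
  assert (Hm1 := Rmin_l (Rmin (Rmin d0 1) (eps / (48 * M))) (Rmin (e1 ^ 3 / (8 * PI ^ 2 * M ^ 2 * (1 + eta * L))) (exp (- Z) / M))).
  assert (Hm2 := Rmin_r (Rmin (Rmin d0 1) (eps / (48 * M))) (Rmin (e1 ^ 3 / (8 * PI ^ 2 * M ^ 2 * (1 + eta * L))) (exp (- Z) / M))).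
  fold d1 in Hm1, Hm2.
  assert (Hm3 := Rmin_l (Rmin d0 1) (eps / (48 * M))). assert (Hm4 := Rmin_r (Rmin d0 1) (eps / (48 * M))).
  assert (Hm5 := Rmin_l d0 1). assert (Hm6 := Rmin_r d0 1).
  assert (Hm7 := Rmin_l (e1 ^ 3 / (8 * PI ^ 2 * M ^ 2 * (1 + eta * L))) (exp (- Z) / M)).
  assert (Hm8 := Rmin_r (e1 ^ 3 / (8 * PI ^ 2 * M ^ 2 * (1 + eta * L))) (exp (- Z) / M)).
  assert (Hdd0 : delta < d0) by lra. assert (Hd1 : delta < 1) by lra.
  assert (HdM : delta * (48 * M) <= eps) by (apply le_div; lra).
  assert (HdU : delta * (8 * PI ^ 2 * M ^ 2 * (1 + eta * L)) <= e1 ^ 3) by (apply le_div; lra).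
  assert (HdZ : delta * M <= exp (- Z)) by (apply le_div; lra).
  assert (Hunif : unif_prop f a b eta d0) by (intros x y Hx Hy Hxy; apply Hu; auto).
  destruct (upper_bound f a b hA hB delta M eta d0 Hd Hdd0 Heta Hunif HM1 HM) as [HupH HupD].
  fold L in HupH, HupD.
  set (U := delta ^ 2 / 12 * (1 + eta * L)).
  assert (HU : 0 < U) by (unfold U; assert (0 < eta * L) by (apply Rmult_lt_0_compat; lra);
    apply Rmult_lt_0_compat; [apply Rdiv_lt_0_compat; [apply pow_lt|]|]; lra).
  assert (HUe : 8 * PI ^ 2 * M ^ 2 * U <= e1 ^ 3).
  { apply Rle_trans with (delta * (8 * PI ^ 2 * M ^ 2 * (1 + eta * L))); auto.
    unfold U. replace (8 * PI ^ 2 * M ^ 2 * (delta ^ 2 / 12 * (1 + eta * L))) with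
      ((delta ^ 2 / 12) * (8 * PI ^ 2 * M ^ 2 * (1 + eta * L))) by ring.
    apply Rmult_le_compat_r. lra. simpl. nra. }
  set (r := 2 * eta / th).
  assert (Hr : 0 <= r) by (unfold r; apply Rlt_le, Rdiv_lt_0_compat; lra).
  set (Err := eta * L + M * delta + r / 2 + eta * L / 2 + Cc * (th + 2 * eta + e1 / d0) * L).
  set (LB := - ln delta - r / 2 - eta * L / 2 - Cc * (th + 2 * eta + e1 / d0) * L).
  assert (HLB : forall Q, valid_quantizer a b Q -> distortion f Q <= distortion f (Q_uni a b delta) ->
     LB <= hdiff f a b + Hn f Q).
  { intros Q hQ HQ. assert (HQU : distortion f Q <= U). { unfold U; lra. }
    pose proof (lower_bound f a b hA hB Q M th eta d0 e1 U hQ HM1 HM Hth Heta Hd0 Hunif He1p HU HQU HUe) as Hlb.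
    fold L in Hlb. fold r in Hlb.
    assert (Heq : ln (12 * (1 + r) * U) = ln (1 + r) + ln (1 + eta * L) + 2 * ln delta).
    { unfold U. assert (0 < eta * L) by (apply Rmult_lt_0_compat; lra).
      replace (12 * (1 + r) * (delta ^ 2 / 12 * (1 + eta * L))) with ((1 + r) * (1 + eta * L) * (delta * delta)) by (simpl; field).
      assert (0 < delta * delta) by nra. assert (0 < (1 + r) * (1 + eta * L)) by (apply Rmult_lt_0_compat; lra).
      rewrite !ln_mult by lra. lra. }
    rewrite Heq in Hlb.
    pose proof (ln1p_le r Hr). assert (0 <= eta * L) by (apply Rmult_le_pos; lra).
    pose proof (ln1p_le (eta * L) H0). unfold LB. lra. }
  set (c := 3 / 2 * ((LB - hdiff f a b) / ln 2)).
  destruct (J_bounds f a b W hA hW delta c Hd) as [HJ1 HJ2].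
  { intros Q hQ HQ. unfold c. apply Rmult_le_compat_l. lra. unfold Rdiv. apply Rmult_le_compat_r.
    apply Rlt_le, Rinv_0_lt_compat; auto. pose proof (HLB Q hQ HQ). lra. }
  assert (HMd : M * delta < 1).
  { assert (exp (- Z) < 1) by (rewrite <- exp_0; apply exp_increasing; lra). lra. }
  pose proof (AoI_uni_upper f a b hA delta M (conj Hd Hd1) HM1 HM HMd) as HA.
  fold K in HA.
  pose proof (Hn_uni_ge f a b hA delta M Hd HM ltac:(lra)) as HHn.
  set (Hu' := Hn f (Q_uni a b delta)) in *.
  set (E := Hu' / ln 2) in *.
  assert (HlnMd : Z <= - ln (M * delta)).
  { assert (ln (M * delta) <= - Z). { rewrite <- (ln_exp (- Z)). apply ln_le. nra. lra. } lra. }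
  assert (HE : Z / ln 2 <= E).
  { unfold E, Rdiv. apply Rmult_le_compat_r. apply Rlt_le, Rinv_0_lt_compat; auto. lra. }
  assert (HEpos : 0 < E) by (assert (0 < Z / ln 2) by (apply Rdiv_lt_0_compat; lra); lra).
  assert (HKE : K / (2 * E) <= eps / 4).
  { apply Rmult_le_reg_r with (2 * E). lra. unfold Rdiv at 1. rewrite Rmult_assoc, Rinv_l, Rmult_1_r by (apply Rgt_not_eq; lra).
    assert (Hl1 : ln 2 < 1).
    { rewrite <- (ln_exp 1). apply ln_increasing. lra. pose proof (exp_ineq1 1 ltac:(lra)). lra. }
    assert (HZl : Z <= Z / ln 2).
    { apply Rmult_le_reg_r with (ln 2); auto. unfold Rdiv.
      rewrite Rmult_assoc, Rinv_l, Rmult_1_r by (apply Rgt_not_eq; auto). nra. }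
    assert (Z * eps <= E * eps) by (apply Rmult_le_compat_r; lra).
    lra. }
  assert (Hdiff : Hu' - (LB - hdiff f a b) <= Err) by (unfold Err, LB; lra).
  assert (HErr0 : 0 <= Err).
  { unfold Err. assert (0 <= e1 / d0) by (apply Rlt_le, Rdiv_lt_0_compat; lra).
    assert (0 <= Cc * (th + 2 * eta + e1 / d0) * L) by (apply Rmult_le_pos; [apply Rmult_le_pos|]; lra).
    assert (0 <= M * delta) by nra. assert (0 <= eta * L) by (apply Rmult_le_pos; lra). lra. }
  assert (H3E : 3 / 2 * E - c <= 3 * Err).
  { unfold E, c. replace (3 / 2 * (Hu' / ln 2) - 3 / 2 * ((LB - hdiff f a b) / ln 2)) with
       (3 / 2 * (Hu' - (LB - hdiff f a b)) / ln 2) by (field; apply Rgt_not_eq; auto).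
    apply Rmult_le_reg_r with (ln 2); auto. unfold Rdiv. rewrite Rmult_assoc, Rinv_l, Rmult_1_r by (apply Rgt_not_eq; auto).
    nra. }
  assert (Hr2 : 3 * (r / 2) <= eps / 16).
  { unfold r. replace (3 * (2 * eta / th / 2)) with (3 * eta / th) by (field; apply Rgt_not_eq; lra).
    apply Rmult_le_reg_r with th; auto. unfold Rdiv at 1. rewrite Rmult_assoc, Rinv_l, Rmult_1_r by (apply Rgt_not_eq; lra).
    lra. }
  assert (Hc1 : 3 * (Cc * th * L) <= eps / 16) by nra.
  assert (Hc3 : 3 * (Cc * (e1 / d0) * L) <= eps / 16).
  { replace (3 * (Cc * (e1 / d0) * L)) with (3 * (e1 * (Cc * L)) / d0) by (field; apply Rgt_not_eq; lra).
    apply Rmult_le_reg_r with d0; auto. unfold Rdiv at 1. rewrite Rmult_assoc, Rinv_l, Rmult_1_r by (apply Rgt_not_eq; lra).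
    nra. }
  assert (H3Err : 3 * Err <= 6 * eps / 16).
  { unfold Err. 
    replace (Cc * (th + 2 * eta + e1 / d0) * L) with (Cc * th * L + 2 * (Cc * eta * L) + Cc * (e1 / d0) * L) by ring.
    nra. }
  split; lra.
Qed.

Theorem theorem1 (f : R -> R) (a b W : R) :
  condA f a b -> condB f a b -> 0 <= W ->
  filterlim
    (fun delta =>
       AoI_opt f zero_wait (Q_uni a b delta)
       - AoI_joint_opt f a b W (distortion f (Q_uni a b delta)))
    (at_right 0) (locally 0).
Proof.
  intros hA hB hW. apply filterlim_locally. intros eps.
  destruct (main_est f a b W hA hB hW eps (cond_pos eps)) as [d1 [Hd1 H]].
  exists (mkposreal d1 Hd1). intros y Hy Hy0.
  assert (Hy' : Rabs (y - 0) < d1) by (apply ball_R; exact Hy).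
  rewrite Rminus_0_r, Rabs_right in Hy' by lra.
  apply ball_R. rewrite Rminus_0_r. destruct (H y (conj Hy0 Hy')). rewrite Rabs_right; lra.
Qed.
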